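(* Let $I=\prod_{i=1}^d[a_i,b_i]$ with $a_i<b_i$, and let $f\in C(I)$ satisfy $f(\mathbf x)=0$ for all $\mathbf x\in\partial I$ and $f(\mathbf x_0)>0$ for some $\mathbf x_0$ in the interior $I^0$. Then there exists a function $$Q(\mathbf x)=A\sum_{i=1}^d(x_i-a_i)^2+C$$ with constants $A<0$ and $C\in\mathbb R$ such that $Q(\mathbf x)>0$ and $Q(\mathbf x)\ge f(\mathbf x)$ for all $\mathbf x\in I$, and there exists $\mathbf y\in I^0$ with $Q(\mathbf y)=f(\mathbf y)$. *)

(* Defs.v *)
(* Points of R^d are modelled as x : nat -> R whose coordinates
   with index >= d are 0 (so the model is exactly R^d); coordinates 0..d-1
   stand for x_1..x_d. *)
From Stdlib Require Import Reals.
Open Scope R_scope.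

Definition pt := nat -> R.

Definition in_Rd (d : nat) (x : pt) : Prop := forall i, (d <= i)%nat -> x i = 0.

Definition in_box (d : nat) (a b : pt) (x : pt) : Prop :=
  in_Rd d x /\ forall i, (i < d)%nat -> a i <= x i <= b i.

Definition in_interior (d : nat) (a b : pt) (x : pt) : Prop :=
  in_Rd d x /\ forall i, (i < d)%nat -> a i < x i < b i.

Definition in_boundary (d : nat) (a b : pt) (x : pt) : Prop :=
  in_box d a b x /\ ~ in_interior d a b x.

Definition continuous_on_box (d : nat) (a b : pt) (f : pt -> R) : Prop :=
  forall x, in_box d a b x -> forall eps, eps > 0 ->
    exists delta, delta > 0 /\
      forall y, in_box d a b y ->
        (forall i, (i < d)%nat -> Rabs (y i - x i) < delta) ->
        Rabs (f y - f x) < eps.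

Fixpoint sqdist (d : nat) (a x : pt) : R :=
  match d with
  | O => 0
  | S n => sqdist n a x + (x n - a n) ^ 2
  end.

(* Main.v *)
Require Import Defs.
From Stdlib Require Import Reals Lra Lia FunctionalExtensionality.
From mathcomp Require all_boot all_algebra.
From mathcomp Require all_classical all_reals all_analysis.
From mathcomp Require Rstruct Rstruct_topology.
Open Scope R_scope.

Module Aux.
Import all_boot all_algebra all_classical all_reals all_analysis Rstruct Rstruct_topology.
Import order.Order.TTheory GRing.Theory Num.Theory.

Definition clampi (a b : pt) (i : nat) (t : R) : R := Rmin (Rmax t (a i)) (b i).
Definition Pc (n : nat) (a b : pt) (x : pt) : pt :=
  fun i => if (i < n)%N then clampi a b i (x i) else 0%R.
Definition phi (n : nat) (v : 'rV[R]_n.+1) : pt :=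
  fun i => if (i < n.+1)%N then v ord0 (inord i) else 0%R.

Arguments phi {n} v i.
Open Scope R_scope.

Lemma clamp_lip a b i s t : a i <= b i ->
  Rabs (clampi a b i s - clampi a b i t) <= Rabs (s - t).
Proof.
intros H; unfold clampi, Rmin, Rmax.
repeat (destruct Rle_dec); unfold Rabs; repeat destruct Rcase_abs; lra.
Qed.

Lemma clamp_in a b i t : a i <= b i -> a i <= clampi a b i t <= b i.
Proof.
intros H; unfold clampi, Rmin, Rmax; repeat (destruct Rle_dec); lra.
Qed.

Lemma clamp_id a b i t : a i <= t <= b i -> clampi a b i t = t.
Proof.
intros H; unfold clampi, Rmin, Rmax; repeat (destruct Rle_dec); lra.
Qed.

Lemma Pc_box n a b x : (forall i, (i < n)%coq_nat -> a i <= b i) ->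
  in_box n a b (Pc n a b x).
Proof.
intros H; split.
- intros i Hi; unfold Pc. have h : (n <= i)%N by apply/ssrnat.leP.
  by rewrite ltnNge h.
- intros i Hi; unfold Pc. have -> : (i < n)%N by apply/ssrnat.ltP.
  apply clamp_in, H, Hi.
Qed.

Lemma Pc_id n a b x : in_box n a b x -> Pc n a b x = x.
Proof.
intros [H1 H2]; apply functional_extensionality => i; unfold Pc.
case: ltnP => h.
- apply clamp_id, H2; apply/ssrnat.ltP: h.
- symmetry; apply H1; apply/ssrnat.leP: h.
Qed.

Lemma box_max (n : nat) (a b : pt) (g : pt -> R) :
  (forall i, (i < n.+1)%coq_nat -> a i <= b i) ->
  continuous_on_box (S n) a b g ->
  exists c, in_box (S n) a b c /\ forall x, in_box (S n) a b x -> g x <= g c.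
Proof.
intros hab cg.
pose F (v : 'rV[R]_n.+1) := g (Pc n.+1 a b (phi v)).
have Fc : continuous F.
  move=> v; apply: (proj2 (@cvgrPdist_lt R R^o _ (nbhs v) _ F (F v))) => e /RltP e0.
  have [del [del0 H]] := cg (Pc n.+1 a b (phi v)) (Pc_box _ _ _ _ hab) e e0.
  apply/nbhs_ballP; exists del => /=; first by apply/RltP.
  move=> w [_ hw].
  apply/RltP; change (Rabs (F v - F w) < e); rewrite Rabs_minus_sym; apply: H; first exact: Pc_box.
  move=> i Hi; unfold Pc. have hi : (i < n.+1)%N by apply/ssrnat.ltP.
  rewrite hi; eapply Rle_lt_trans; first by apply clamp_lip, hab.
  rewrite /phi hi Rabs_minus_sym.
  have := hw ord0 (inord i). rewrite /ball /=. by move/RltP.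
pose A := [set v : 'rV[R]_n.+1 | forall i : 'I_n.+1, (`[a i, b i]%classic) (v ord0 i)]%classic.
have cA : compact A.
  apply: (@rV_compact _ _ (fun i : 'I_n.+1 => `[a i, b i]%classic)).
  move=> i; exact: segment_compact.
have A0 : (A !=set0)%classic.
  exists (\row_(i < n.+1) a i)%R => i /=; rewrite mxE in_itv /=.
  apply/andP; split; apply/RleP; [lra| apply hab; apply/ssrnat.ltP; exact: ltn_ord].
have [c' _ Hc'] := compact_EVT_max A0 cA (continuous_subspaceT Fc).
exists (Pc n.+1 a b (phi c')); split; first exact: Pc_box.
move=> x hx.
have ex : Pc n.+1 a b (phi (\row_(i < n.+1) x i)%R) = x.
  rewrite -{2}(Pc_id _ _ _ _ hx); apply functional_extensionality => i.
  rewrite /Pc /phi; case: ltnP => // h. by rewrite mxE inordK.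
have := Hc' (\row_(i < n.+1) x i)%R. rewrite -/(F _) /F ex => h; apply/RleP; apply: h.
rewrite inE => i /=; rewrite mxE in_itv /=.
have [_ h2] := hx; have [h3 h4] := h2 i (ssrnat.ltP (ltn_ord i)).
by apply/andP; split; apply/RleP.
Qed.
End Aux.

Lemma sq_le (d : nat) (a b x : pt) :
  (forall i, (i < d)%nat -> a i <= x i <= b i) ->
  forall n, (n <= d)%nat -> 0 <= sqdist n a x <= sqdist n a b.
Proof.
intros H n; induction n as [|n IH]; intros Hn; simpl.
- lra.
- assert (Hi := H n ltac:(lia)). assert (IH' := IH ltac:(lia)).
  assert (0 <= (x n - a n) ^ 2 <= (b n - a n) ^ 2) by nra. lra.
Qed.

Lemma sq_lt (d : nat) (a b x : pt) :
  (1 <= d)%nat ->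
  (forall i, (i < d)%nat -> a i < x i < b i) ->
  sqdist d a x < sqdist d a b.
Proof.
intros Hd H. destruct d as [|m]; [lia|]. simpl.
assert (Hl := sq_le (S m) a b x ltac:(intros i Hi; specialize (H i Hi); lra) m ltac:(lia)).
assert (Hi := H m ltac:(lia)).
assert ((x m - a m) ^ 2 < (b m - a m) ^ 2) by nra. lra.
Qed.

Fixpoint wsum (n : nat) (a b : pt) : R :=
  match n with O => 0 | S m => wsum m a b + 2 * (b m - a m) end.

Lemma sq_lip (d : nat) (a b x y : pt) (del : R) :
  (forall i, (i < d)%nat -> a i <= x i <= b i) ->
  (forall i, (i < d)%nat -> a i <= y i <= b i) ->
  (forall i, (i < d)%nat -> Rabs (y i - x i) < del) ->
  forall n, (n <= d)%nat ->
  0 <= wsum n a b /\ Rabs (sqdist n a y - sqdist n a x) <= del * wsum n a b.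
Proof.
intros Hx Hy Hd n; induction n as [|n IH]; intros Hn; cbn [sqdist wsum].
- unfold Rminus. rewrite Rplus_opp_r, Rabs_R0. lra.
- destruct (IH ltac:(lia)) as [IH1 IH2].
  assert (Hxn := Hx n ltac:(lia)). assert (Hyn := Hy n ltac:(lia)).
  assert (Hdn := Hd n ltac:(lia)).
  assert (E : sqdist n a y + (y n - a n) ^ 2 - (sqdist n a x + (x n - a n) ^ 2)
     = (sqdist n a y - sqdist n a x) + (y n - x n) * (y n + x n - 2 * a n)) by ring.
  rewrite E.
  assert (H2 : Rabs ((y n - x n) * (y n + x n - 2 * a n)) <= del * (2 * (b n - a n))).
  { rewrite Rabs_mult.
    assert (Rabs (y n + x n - 2 * a n) <= 2 * (b n - a n)) by (apply Rabs_le; lra).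
    assert (0 <= Rabs (y n - x n)) by apply Rabs_pos.
    assert (0 <= Rabs (y n + x n - 2 * a n)) by apply Rabs_pos.
    nra. }
  split; [lra|].
  eapply Rle_trans; [apply Rabs_triang|]. lra.
Qed.

Theorem theorem5p1 (d : nat) (a b : pt) (f : pt -> R) :
  (1 <= d)%nat ->
  (forall i, (i < d)%nat -> a i < b i) ->
  continuous_on_box d a b f ->
  (forall x, in_boundary d a b x -> f x = 0) ->
  (exists x0, in_interior d a b x0 /\ f x0 > 0) ->
  exists A C : R, A < 0 /\
    (forall x, in_box d a b x ->
       A * sqdist d a x + C > 0 /\ A * sqdist d a x + C >= f x) /\
    (exists y, in_interior d a b y /\ A * sqdist d a y + C = f y).
Proof.
intros Hd Hab Hf Hbd [x0 [Hx0 Hfx0]].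
set (M := sqdist d a b). set (s0 := sqdist d a x0).
assert (HD : s0 < M) by (apply sq_lt; [exact Hd| apply Hx0]).
set (A := - f x0 / (2 * (M - s0))).
assert (HA : A < 0).
{ unfold A. apply Rdiv_neg_pos; lra. }
assert (HAD : A * (M - s0) = - f x0 / 2).
{ unfold A. field. lra. }
assert (HAD' : A * M - A * s0 = - f x0 / 2) by (rewrite <- HAD; ring).
set (g := fun x => f x - A * sqdist d a x).
assert (Hg : continuous_on_box d a b g).
{ intros x Hx eps Heps.
  destruct (Hf x Hx (eps / 2) ltac:(lra)) as [del1 [Hdel1 Hf1]].
  set (W := wsum d a b).
  assert (HW : 0 <= W).
  { destruct (sq_lip d a b x x 1 (proj2 Hx) (proj2 Hx)
      ltac:(intros i _; unfold Rminus; rewrite Rplus_opp_r, Rabs_R0; lra) d (le_n _)); auto. }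
  set (K := - A * W + 1).
  assert (HK : 0 < K) by (unfold K; nra).
  exists (Rmin del1 (eps / (2 * K))). split.
  { apply Rmin_pos; [lra|]. apply Rdiv_lt_0_compat; lra. }
  intros y Hy Hyx.
  assert (Hy1 : forall i, (i < d)%nat -> Rabs (y i - x i) < del1).
  { intros i Hi. specialize (Hyx i Hi). assert (Rmin del1 (eps / (2 * K)) <= del1) by apply Rmin_l. lra. }
  assert (Hfy := Hf1 y Hy Hy1).
  destruct (sq_lip d a b x y _ (proj2 Hx) (proj2 Hy) Hyx d (le_n _)) as [_ Hs].
  fold W in Hs.
  assert (Hm : Rmin del1 (eps / (2 * K)) <= eps / (2 * K)) by apply Rmin_r.
  assert (Hm2 : Rmin del1 (eps / (2 * K)) * W <= eps / (2 * K) * W) by (apply Rmult_le_compat_r; lra).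
  assert (Hk : eps / (2 * K) * (- A * W) < eps / 2).
  { assert (E : eps / (2 * K) * (- A * W) = eps / 2 * ((- A * W) / K)) by (field; lra).
    rewrite E. assert ((- A * W) / K < 1).
    { apply (Rmult_lt_reg_r K); [lra|]. unfold Rdiv. rewrite Rmult_assoc, Rinv_l; [|lra]. unfold K; lra. }
    nra. }
  unfold g.
  replace (f y - A * sqdist d a y - (f x - A * sqdist d a x))
    with ((f y - f x) + (- A) * (sqdist d a y - sqdist d a x)) by ring.
  eapply Rle_lt_trans; [apply Rabs_triang|].
  rewrite Rabs_mult, (Rabs_right (- A)) by lra.
  assert (0 <= eps / (2 * K)) by (apply Rlt_le, Rdiv_lt_0_compat; lra).
  nra. }
destruct d as [|n]; [lia|].
destruct (Aux.box_max n a b g ltac:(intros i Hi; specialize (Hab i Hi); lra) Hg)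
  as [c [Hc Hmax]].
exists A, (g c). split; [exact HA|]. split.
- intros x Hx. split.
  + assert (Hl := sq_le (S n) a b x (proj2 Hx) (S n) (le_n _)).
    assert (Hm := Hmax x0 ltac:(split; [apply Hx0| intros i Hi; specialize (proj2 Hx0 i Hi); lra])).
    unfold g in Hm. fold s0 in Hm. fold M in Hl.
    assert (A * sqdist (S n) a x >= A * M) by (apply Rle_ge, Rmult_le_compat_neg_l; lra).
    unfold g. lra.
  + assert (Hm := Hmax x Hx). unfold g in Hm |- *. lra.
- exists c. split.
  + destruct (Classical_Prop.classic (in_interior (S n) a b c)) as [Hi|Hni]; [exact Hi|].
    exfalso. assert (Hf0 := Hbd c (conj Hc Hni)).
    assert (Hm := Hmax x0 ltac:(split; [apply Hx0| intros i Hi; specialize (proj2 Hx0 i Hi); lra])).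
    assert (Hl := sq_le (S n) a b c (proj2 Hc) (S n) (le_n _)).
    unfold g in Hm. rewrite Hf0 in Hm. fold s0 in Hm. fold M in Hl.
    assert (A * sqdist (S n) a c >= A * M) by (apply Rle_ge, Rmult_le_compat_neg_l; lra).
    lra.
  + unfold g. ring.
Qed.
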